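(* Let $X$ be a topological space in which every open set is a union of countably many clopen sets. If $X$ is a QN space, then $X$ is a wQN$_*$ space.
   Context: Functions $f_n:X\to\mathbb{R}$ converge quasi-normally to $0$ if there are positive reals $\epsilon_n\to0$ such that for each $x\in X$, $|f_n(x)|<\epsilon_n$ for all but finitely many $n$. $X$ is a QN space if every sequence of continuous real-valued functions on $X$ converging pointwise to $0$ converges to $0$ quasi-normally. $X$ is wQN$_*$ if every sequence of lower semi-continuous real-valued functions on $X$ converging pointwise to $0$ has a subsequence converging to $0$ quasi-normally. *)

(* Defs.v *)
From Stdlib Require Import Reals.
Open Scope R_scope.

Record TopSpace := {
  carrier :> Type;
  is_open : (carrier -> Prop) -> Prop;
  open_full : is_open (fun _ => True);
  open_inter : forall U V, is_open U -> is_open V -> is_open (fun x => U x /\ V x);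
  open_union : forall F : (carrier -> Prop) -> Prop,
      (forall U, F U -> is_open U) -> is_open (fun x => exists U, F U /\ U x)
}.

Definition is_closed {X : TopSpace} (C : X -> Prop) : Prop :=
  is_open X (fun x => ~ C x).

Definition is_clopen {X : TopSpace} (C : X -> Prop) : Prop :=
  is_open X C /\ is_closed C.

(* Every open set is the union of countably many clopen sets
   (countable families indexed by nat; repetitions / the empty set allowed). *)
Definition open_countable_union_clopen (X : TopSpace) : Prop :=
  forall U : X -> Prop, is_open X U ->
    exists C : nat -> (X -> Prop),
      (forall n, is_clopen (C n)) /\ (forall x, U x <-> exists n, C n x).

Definition continuous_real {X : TopSpace} (f : X -> R) : Prop :=
  forall V : R -> Prop, open_set V -> is_open X (fun x => V (f x)).

Definition lsc_real {X : TopSpace} (f : X -> R) : Prop :=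
  forall a : R, is_open X (fun x => a < f x).

Definition pointwise_cv_0 {X : TopSpace} (f : nat -> X -> R) : Prop :=
  forall x : X, Un_cv (fun n => f n x) 0.

Definition qn_cv_0 {X : TopSpace} (f : nat -> X -> R) : Prop :=
  exists eps : nat -> R,
    (forall n, 0 < eps n) /\ Un_cv eps 0 /\
    (forall x : X, exists N : nat, forall n : nat, (N <= n)%nat -> Rabs (f n x) < eps n).

Definition QN_space (X : TopSpace) : Prop :=
  forall f : nat -> X -> R,
    (forall n, continuous_real (f n)) -> pointwise_cv_0 f -> qn_cv_0 f.

Definition wQN_star_space (X : TopSpace) : Prop :=
  forall f : nat -> X -> R,
    (forall n, lsc_real (f n)) -> pointwise_cv_0 f ->
    exists phi : nat -> nat,
      (forall n, (phi n < phi (S n))%nat) /\ qn_cv_0 (fun n => f (phi n)).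

(* Main.v *)
Require Import Defs.
From Stdlib Require Import Reals.
From Stdlib Require Import Lra Lia Arith Wf_nat.
From Stdlib Require Import Classical ClassicalEpsilon FunctionalExtensionality PropExtensionality.
From Stdlib Require Import Cantor.
Open Scope R_scope.

Lemma open_ext (X : TopSpace) (U V : X -> Prop) :
  (forall x, U x <-> V x) -> is_open X U -> is_open X V.
Proof.
  intros H HU. assert (E : U = V).
  { apply functional_extensionality; intro x; apply propositional_extensionality; apply H. }
  now rewrite <- E.
Qed.

Lemma open_empty (X : TopSpace) : is_open X (fun _ => False).
Proof.
  apply (open_ext X (fun x => exists U, (fun _ : X -> Prop => False) U /\ U x)).
  - intros x; split; [intros [U [[] _]] | intros []].
  - apply open_union; intros U [].
Qed.

Lemma open_union2 (X : TopSpace) (U V : X -> Prop) :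
  is_open X U -> is_open X V -> is_open X (fun x => U x \/ V x).
Proof.
  intros HU HV.
  apply (open_ext X (fun x => exists W, (fun W => W = U \/ W = V) W /\ W x)).
  - intro x; split.
    + intros [W [[-> | ->] HW]]; auto.
    + intros [H|H]; eauto.
  - apply open_union; intros W [-> | ->]; auto.
Qed.

Lemma clopen_ext (X : TopSpace) (A B : X -> Prop) :
  (forall x, A x <-> B x) -> is_clopen A -> is_clopen B.
Proof.
  intros H [H1 H2]; split.
  - exact (open_ext X A B H H1).
  - unfold is_closed in *. apply (open_ext X (fun x => ~ A x)); [|exact H2].
    intro x; rewrite H; tauto.
Qed.

Lemma clopen_compl (X : TopSpace) (A : X -> Prop) : is_clopen A -> is_clopen (fun x => ~ A x).
Proof.
  intros [H1 H2]; split; [exact H2|].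
  unfold is_closed. apply (open_ext X A); [|exact H1].
  intro x; split; [intros a na; exact (na a) | intro h; apply NNPP; exact h].
Qed.

Lemma clopen_union2 (X : TopSpace) (A B : X -> Prop) :
  is_clopen A -> is_clopen B -> is_clopen (fun x => A x \/ B x).
Proof.
  intros [A1 A2] [B1 B2]; split.
  - now apply open_union2.
  - unfold is_closed. apply (open_ext X (fun x => (~ A x) /\ (~ B x))).
    + intro x; tauto.
    + now apply open_inter.
Qed.

Lemma clopen_inter2 (X : TopSpace) (A B : X -> Prop) :
  is_clopen A -> is_clopen B -> is_clopen (fun x => A x /\ B x).
Proof.
  intros [A1 A2] [B1 B2]; split.
  - now apply open_inter.
  - unfold is_closed. apply (open_ext X (fun x => (~ A x) \/ (~ B x))).
    + intro x; split; [tauto | apply not_and_or].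
    + now apply open_union2.
Qed.

Lemma clopen_finunion (X : TopSpace) (C : nat -> X -> Prop) :
  (forall m, is_clopen (C m)) -> forall J, is_clopen (fun x => exists m, (m < J)%nat /\ C m x).
Proof.
  intros HC J; induction J.
  - split.
    + apply (open_ext X (fun _ => False)); [|apply open_empty].
      intro x; split; [intros []| intros [m [Hm _]]; lia].
    + unfold is_closed; apply (open_ext X (fun _ => True)); [|apply open_full].
      intro x; split; [intros _ [m [Hm _]]; lia | auto].
  - apply (clopen_ext X (fun x => (exists m, (m < J)%nat /\ C m x) \/ C J x)).
    + intro x; split.
      * intros [[m [Hm Hc]]|Hc]; exists m || exists J; split; auto; lia.
      * intros [m [Hm Hc]]. destruct (Nat.eq_dec m J) as [->|Hne]; [now right|].
        left; exists m; split; auto; lia.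
    + now apply clopen_union2.
Qed.

Definition LC {X : TopSpace} (g : X -> R) : Prop :=
  forall x, exists U, is_open X U /\ U x /\ forall y, U y -> g y = g x.

Lemma lc_cont (X : TopSpace) (g : X -> R) : LC g -> continuous_real g.
Proof.
  intros H V HV.
  apply (open_ext X (fun x => exists U, (fun U => is_open X U /\ forall y, U y -> V (g y)) U /\ U x)).
  - intro x; split.
    + intros [U [[_ HU] Ux]]. now apply HU.
    + intro Vx. destruct (H x) as [U [HUo [Ux HUc]]].
      exists U; repeat split; auto. intros y Uy. rewrite HUc; auto.
  - apply open_union. intros U [HU _]; exact HU.
Qed.

Definition ind {X : TopSpace} (A : X -> Prop) (c : R) (x : X) : R :=
  if excluded_middle_informative (A x) then c else 0.

Lemma ind_lc (X : TopSpace) (A : X -> Prop) c : is_clopen A -> LC (ind A c).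
Proof.
  intros [HA1 HA2] x. unfold ind. destruct (excluded_middle_informative (A x)) as [a|na].
  - exists A; repeat split; auto. intros y Ay; destruct (excluded_middle_informative (A y)); tauto.
  - exists (fun y => ~ A y); repeat split; auto.
    intros y Ay; destruct (excluded_middle_informative (A y)); tauto.
Qed.

Lemma ind_in (X : TopSpace) (A : X -> Prop) c x : A x -> ind A c x = c.
Proof. intro a; unfold ind; destruct (excluded_middle_informative (A x)); tauto. Qed.

Lemma ind_out (X : TopSpace) (A : X -> Prop) c x : ~ A x -> ind A c x = 0.
Proof. intro a; unfold ind; destruct (excluded_middle_informative (A x)); tauto. Qed.

Lemma max_lc (X : TopSpace) (g h : X -> R) : LC g -> LC h -> LC (fun x => Rmax (g x) (h x)).
Proof.
  intros Hg Hh x. destruct (Hg x) as [U [U1 [U2 U3]]]. destruct (Hh x) as [V [V1 [V2 V3]]].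
  exists (fun y => U y /\ V y); repeat split; auto.
  - now apply open_inter.
  - intros y [Uy Vy]. now rewrite U3, V3.
Qed.

Fixpoint fmax (T : nat -> R) (j : nat) : R :=
  match j with O => T O | S j' => Rmax (fmax T j') (T (S j')) end.

Lemma fmax_ge T j k : (k <= j)%nat -> T k <= fmax T j.
Proof.
  induction j; intro H; simpl.
  - replace k with 0%nat by lia; lra.
  - destruct (Nat.eq_dec k (S j)) as [->|Hne].
    + apply Rmax_r.
    + eapply Rle_trans; [apply IHj; lia | apply Rmax_l].
Qed.

Lemma fmax_lt T j e : (forall k, (k <= j)%nat -> T k < e) -> fmax T j < e.
Proof.
  induction j; intro H; simpl.
  - apply H; lia.
  - apply Rmax_lub_lt; [apply IHj; intros; apply H; lia | apply H; lia].
Qed.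

Lemma fmax_lc (X : TopSpace) (T : nat -> X -> R) j :
  (forall k, LC (T k)) -> LC (fun x => fmax (fun k => T k x) j).
Proof.
  intro H; induction j; simpl.
  - apply H.
  - apply (max_lc X _ _ IHj (H (S j))).
Qed.

Lemma least_ex (Q : nat -> Prop) : (exists m, Q m) -> exists m, Q m /\ forall j, (j < m)%nat -> ~ Q j.
Proof.
  intros [m Hm]. revert Hm. induction m as [m IH] using (well_founded_induction lt_wf). intros Hm.
  destruct (classic (exists j, (j < m)%nat /\ Q j)) as [[j [Hj Qj]]|H].
  - exact (IH j Hj Qj).
  - exists m; split; auto. intros j Hj Qj; apply H; eauto.
Qed.

Lemma arch (e : R) : 0 < e -> exists K : nat, / (INR K + 1) < e.
Proof.
  intro He. destruct (INR_archimed e 1 He) as [n Hn]. exists n.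
  assert (0 <= INR n) by apply pos_INR.
  apply (Rmult_lt_reg_l (INR n + 1)); [lra|].
  rewrite Rinv_r by lra. nra.
Qed.

Lemma fin_bound1 (P : nat -> nat -> Prop) :
  (forall k, exists B, forall B', (B <= B')%nat -> P k B') ->
  forall K, exists B, forall B', (B <= B')%nat -> forall k, (k <= K)%nat -> P k B'.
Proof.
  intros H K; induction K.
  - destruct (H 0%nat) as [B HB]. exists B. intros B' HB' k Hk. replace k with 0%nat by lia; auto.
  - destruct IHK as [B1 H1]. destruct (H (S K)) as [B2 H2]. exists (Nat.max B1 B2).
    intros B' HB' k Hk. destruct (Nat.eq_dec k (S K)) as [->|Hne].
    + apply H2; lia.
    + apply H1; lia.
Qed.

Lemma fin_bound2 (P : nat -> nat -> nat -> Prop) :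
  (forall n k, exists B, forall B', (B <= B')%nat -> P n k B') ->
  forall K, exists B, forall n k, (n <= K)%nat -> (k <= K)%nat -> P n k B.
Proof.
  intros H K.
  destruct (fin_bound1 (fun n B => forall k, (k <= K)%nat -> P n k B)) with (K := K) as [B HB].
  - intro n. apply (fin_bound1 (fun k B => P n k B)). apply H.
  - exists B. intros n k Hn Hk. apply HB; auto.
Qed.
Definition enc (n k m : nat) : nat := to_nat (to_nat (n, k), m).
Definition dec (i : nat) : nat * nat * nat :=
  let (a, m) := of_nat i in let (n, k) := of_nat a in (n, k, m).

Lemma dec_enc n k m : dec (enc n k m) = (n, k, m).
Proof. unfold dec, enc. rewrite cancel_of_to. rewrite cancel_of_to. reflexivity. Qed.

Lemma enc_dec i n k m : dec i = (n, k, m) -> enc n k m = i.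
Proof.
  unfold dec. destruct (of_nat i) as [a m'] eqn:E1. destruct (of_nat a) as [n' k'] eqn:E2.
  intro H; inversion H; subst. unfold enc. rewrite <- E2, cancel_to_of, <- E1, cancel_to_of. reflexivity.
Qed.

Lemma enc_ge n k m : (n + k + m <= enc n k m)%nat.
Proof.
  unfold enc. pose proof (to_nat_non_decreasing (to_nat (n, k)) m).
  pose proof (to_nat_non_decreasing n k). lia.
Qed.

Definition w (n k : nat) : R := / (INR n + INR k + 1).

Lemma w_pos n k : 0 < w n k.
Proof. unfold w. pose proof (pos_INR n); pose proof (pos_INR k). apply Rinv_0_lt_compat; lra. Qed.

Lemma stage1 (X : TopSpace) (HQN : QN_space X) (A : nat -> nat -> nat -> X -> Prop) :
  (forall n k m, is_clopen (A n k m)) ->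
  (forall x n k m m', A n k m x -> A n k m' x -> m = m') ->
  exists J : nat -> nat -> nat, exists N : X -> nat,
    forall x n k m, (N x <= n)%nat -> A n k m x -> (m < J n k)%nat.
Proof.
  intros HA Huniq.
  set (t := fun i x => let '(n, k, m) := dec i in ind (A n k m) (w n k) x).
  assert (tnn : forall i x, 0 <= t i x).
  { intros i x. unfold t. destruct (dec i) as [[n k] m]. unfold ind.
    destruct (excluded_middle_informative (A n k m x)); [left; apply w_pos | lra]. }
  destruct (HQN t) as [eta [Hpos [Hcv Hqn]]].
  - intro i. apply lc_cont. unfold t. destruct (dec i) as [[n k] m]. apply ind_lc, HA.
  - intros x e He. destruct (arch e He) as [K HK].
    destruct (fin_bound2 (fun n k B => forall m, A n k m x -> (enc n k m < B)%nat)) with (K := K)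
      as [B HB].
    + intros n k. destruct (classic (exists m, A n k m x)) as [[m Hm]|Hno].
      * exists (S (enc n k m)). intros B' HB' m' Hm'.
        rewrite (Huniq x n k m' m Hm' Hm). lia.
      * exists 0%nat. intros B' _ m' Hm'. exfalso; eauto.
    + exists B. intros i Hi. unfold Rdist. rewrite Rminus_0_r, Rabs_right by (apply Rle_ge, tnn).
      unfold t. destruct (dec i) as [[n k] m] eqn:Ed.
      destruct (classic (A n k m x)) as [Ha|Ha]; [|rewrite ind_out by exact Ha; lra].
      rewrite ind_in by exact Ha.
      destruct (le_dec n K) as [HnK|HnK]; [destruct (le_dec k K) as [HkK|HkK]|].
      * exfalso. pose proof (HB n k HnK HkK m Ha). rewrite (enc_dec i n k m Ed) in H. lia.
      * eapply Rle_lt_trans; [|exact HK]. unfold w. apply Rinv_le_contravar.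
        -- pose proof (pos_INR K); lra.
        -- assert (INR K <= INR k) by (apply le_INR; lia). pose proof (pos_INR n); lra.
      * eapply Rle_lt_trans; [|exact HK]. unfold w. apply Rinv_le_contravar.
        -- pose proof (pos_INR K); lra.
        -- assert (INR K <= INR n) by (apply le_INR; lia). pose proof (pos_INR k); lra.
  - assert (HJ : forall n k, {J : nat | forall i, (i >= J)%nat -> Rdist (eta i) 0 < w n k}).
    { intros n k. apply constructive_indefinite_description. apply Hcv. apply w_pos. }
    exists (fun n k => proj1_sig (HJ n k)).
    exists (fun x => proj1_sig (constructive_indefinite_description _ (Hqn x))).
    intros x n k m Hn Ham.
    destruct (constructive_indefinite_description _ (Hqn x)) as [Nx HNx]. simpl in Hn.
    destruct (HJ n k) as [J HJ']. simpl.
    destruct (lt_dec m J) as [Hlt|Hge]; [exact Hlt|exfalso].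
    pose proof (enc_ge n k m) as Hge2.
    assert (H1 := HJ' (enc n k m) ltac:(lia)).
    assert (H2 := HNx (enc n k m) ltac:(lia)).
    unfold t in H2. rewrite dec_enc, ind_in in H2 by exact Ham.
    unfold Rdist in H1. rewrite Rminus_0_r in H1.
    pose proof (Rle_abs (eta (enc n k m))). pose proof (Rle_abs (w n k)). 
    rewrite Rabs_right in H2 by (left; apply w_pos). lra.
Qed.

Definition v (k : nat) : R := / (INR k + 1).

Lemma v_pos k : 0 < v k.
Proof. unfold v. pose proof (pos_INR k). apply Rinv_0_lt_compat; lra. Qed.

Lemma stage2 (X : TopSpace) (HQN : QN_space X) (bad : nat -> nat -> X -> Prop) :
  (forall n k, is_clopen (bad n k)) ->
  (forall x k, exists N, forall n, (N <= n)%nat -> ~ bad n k x) ->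
  exists d : nat -> R, (forall n, 0 < d n) /\ Un_cv d 0 /\
    forall x, exists M, forall n k, (M <= n)%nat -> (k <= n)%nat -> bad n k x -> v k < d n.
Proof.
  intros Hb Hfin.
  set (g := fun n x => fmax (fun k => ind (bad n k) (v k) x) n).
  assert (gnn : forall n x, 0 <= g n x).
  { intros n x. unfold g. eapply Rle_trans; [|apply (fmax_ge _ n 0%nat); lia].
    unfold ind; destruct (excluded_middle_informative (bad n 0%nat x)); [left; apply v_pos|lra]. }
  destruct (HQN g) as [d [Hpos [Hcv Hqn]]].
  - intro n. apply lc_cont. unfold g. apply (fmax_lc X (fun k => ind (bad n k) (v k))).
    intro k; apply ind_lc, Hb.
  - intros x e He. destruct (arch e He) as [K HK].
    destruct (fin_bound1 (fun k n => ~ bad n k x)) with (K := K) as [N HN].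
    + intro k. destruct (Hfin x k) as [N HN]. exists N. intros; apply HN; lia.
    + exists N. intros n Hn. unfold Rdist. rewrite Rminus_0_r, Rabs_right by (apply Rle_ge, gnn).
      unfold g. apply fmax_lt. intros k Hk.
      destruct (le_dec k K) as [HkK|HkK].
      * rewrite ind_out by (apply HN; lia). lra.
      * unfold ind; destruct (excluded_middle_informative (bad n k x)); [|lra].
        eapply Rle_lt_trans; [|exact HK]. unfold v. apply Rinv_le_contravar.
        -- pose proof (pos_INR K); lra.
        -- assert (INR K <= INR k) by (apply le_INR; lia). lra.
  - exists d. split; [exact Hpos|]. split; [exact Hcv|].
    intro x. destruct (Hqn x) as [M HM]. exists M. intros n k Hn Hk Hbad.
    specialize (HM n Hn). rewrite Rabs_right in HM by (apply Rle_ge, gnn).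
    eapply Rle_lt_trans; [|exact HM]. unfold g.
    rewrite <- (ind_in X (bad n k) (v k) x Hbad).
    apply (fmax_ge (fun k => ind (bad n k) (v k) x) n k Hk).
Qed.

Lemma kfind (b : R) : 0 < b -> exists k, v k < b /\ (k = 0%nat \/ b <= / INR k).
Proof.
  intro Hb. destruct (arch b Hb) as [N HN].
  induction N.
  - exists 0%nat; split; [exact HN | now left].
  - destruct (Rlt_le_dec (v N) b) as [Hl|Hl].
    + exact (IHN Hl).
    + exists (S N). split; [exact HN|]. right. unfold v in Hl.
      rewrite S_INR. exact Hl.
Qed.

Lemma least_entry (Q : nat -> Prop) : (exists m, Q m) ->
  exists m, (Q m /\ forall j, (j < m)%nat -> ~ Q j).
Proof. apply least_ex. Qed.

Theorem mainTheorem12 (X : TopSpace) :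
  open_countable_union_clopen X -> QN_space X -> wQN_star_space X.
Proof.
  intros Hoc HQN f Hlsc Hcv.
  exists (fun n => n). split; [intro; lia|].
  assert (DP : forall n k, {C : nat -> X -> Prop | (forall m, is_clopen (C m)) /\
     (forall x, v k < f n x <-> exists m, C m x)}).
  { intros n k. apply constructive_indefinite_description. apply Hoc. apply Hlsc. }
  assert (DQ : forall n k, {C : nat -> X -> Prop | (forall m, is_clopen (C m)) /\
     (forall x, - v k < f n x <-> exists m, C m x)}).
  { intros n k. apply constructive_indefinite_description. apply Hoc. apply Hlsc. }
  set (CP := fun n k => proj1_sig (DP n k)).
  set (CQ := fun n k => proj1_sig (DQ n k)).
  assert (CPc : forall n k m, is_clopen (CP n k m)).
  { intros n k. exact (proj1 (proj2_sig (DP n k))). }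
  assert (CQc : forall n k m, is_clopen (CQ n k m)).
  { intros n k. exact (proj1 (proj2_sig (DQ n k))). }
  assert (CPe : forall n k x, v k < f n x <-> exists m, CP n k m x).
  { intros n k. exact (proj2 (proj2_sig (DP n k))). }
  assert (CQe : forall n k x, - v k < f n x <-> exists m, CQ n k m x).
  { intros n k. exact (proj2 (proj2_sig (DQ n k))). }
  clearbody CP CQ.
  set (EP := fun n k m x => CP n k m x /\ forall j, (j < m)%nat -> ~ CP n k j x).
  set (EQ := fun n k m x => CQ n k m x /\ forall j, (j < m)%nat -> ~ CQ n k j x).
  assert (uniq : forall (C : nat -> X -> Prop) x m m',
    (C m x /\ forall j, (j < m)%nat -> ~ C j x) ->
    (C m' x /\ forall j, (j < m')%nat -> ~ C j x) -> m = m').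
  { intros C x m m' [H1 H2] [H3 H4]. destruct (lt_eq_lt_dec m m') as [[Hl|Hl]|Hl]; auto.
    - exfalso; exact (H4 m Hl H1).
    - exfalso; exact (H2 m' Hl H3). }
  destruct (stage1 X HQN EP) as [JP [NP HP]].
  { intros n k m. apply clopen_inter2; [apply CPc|].
    apply (clopen_ext X (fun x => ~ exists j, (j < m)%nat /\ CP n k j x)).
    - intro x; split; [intros H j Hj Hc; apply H; eauto | intros H [j [Hj Hc]]; exact (H j Hj Hc)].
    - apply clopen_compl, clopen_finunion, CPc. }
  { intros x n k m m'. apply uniq. }
  destruct (stage1 X HQN EQ) as [JQ [NQ HQ]].
  { intros n k m. apply clopen_inter2; [apply CQc|].
    apply (clopen_ext X (fun x => ~ exists j, (j < m)%nat /\ CQ n k j x)).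
    - intro x; split; [intros H j Hj Hc; apply H; eauto | intros H [j [Hj Hc]]; exact (H j Hj Hc)].
    - apply clopen_compl, clopen_finunion, CQc. }
  { intros x n k m m'. apply uniq. }
  set (BP := fun n k x => exists m, (m < JP n k)%nat /\ CP n k m x).
  set (BQ := fun n k x => exists m, (m < JQ n k)%nat /\ CQ n k m x).
  assert (BP_P : forall n k x, BP n k x -> v k < f n x).
  { intros n k x [m [_ Hm]]. apply CPe; eauto. }
  assert (BQ_Q : forall n k x, BQ n k x -> - v k < f n x).
  { intros n k x [m [_ Hm]]. apply CQe; eauto. }
  assert (P_BP : forall n k x, (NP x <= n)%nat -> v k < f n x -> BP n k x).
  { intros n k x Hn Hf. apply CPe in Hf. destruct (least_entry _ Hf) as [m Hm].
    exists m; split; [apply (HP x n k m Hn Hm) | apply Hm]. }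
  assert (Q_BQ : forall n k x, (NQ x <= n)%nat -> - v k < f n x -> BQ n k x).
  { intros n k x Hn Hf. apply CQe in Hf. destruct (least_entry _ Hf) as [m Hm].
    exists m; split; [apply (HQ x n k m Hn Hm) | apply Hm]. }
  destruct (stage2 X HQN (fun n k x => BP n k x \/ ~ BQ n k x)) as [d [dpos [dcv Hd]]].
  { intros n k. apply clopen_union2; [apply clopen_finunion, CPc|].
    apply clopen_compl, clopen_finunion, CQc. }
  { intros x k. destruct (Hcv x (v k) (v_pos k)) as [N HN].
    exists (Nat.max N (NQ x)). intros n Hn [Hb|Hb].
    - specialize (HN n ltac:(lia)). apply BP_P in Hb. unfold Rdist in HN.
      rewrite Rminus_0_r in HN. pose proof (Rle_abs (f n x)). lra.
    - apply Hb, Q_BQ; [lia|]. specialize (HN n ltac:(lia)). unfold Rdist in HN.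
      rewrite Rminus_0_r in HN. pose proof (Rle_abs (- f n x)). rewrite Rabs_Ropp in H. lra. }
  exists (fun n => 2 * d n + 2 * / (INR n + 1)). split; [|split].
  - intro n. pose proof (dpos n). pose proof (pos_INR n).
    assert (0 < / (INR n + 1)) by (apply Rinv_0_lt_compat; lra). lra.
  - replace 0 with (2 * 0 + 2 * 0) by ring.
    apply CV_plus; apply CV_mult; try apply dcv.
    + intros e He; exists 0%nat; intros; unfold Rdist; rewrite Rminus_diag, Rabs_R0; lra.
    + intros e He; exists 0%nat; intros; unfold Rdist; rewrite Rminus_diag, Rabs_R0; lra.
    + intros e He. destruct (arch e He) as [K HK]. exists K. intros n Hn.
      unfold Rdist. rewrite Rminus_0_r. pose proof (pos_INR n).
      rewrite Rabs_right by (left; apply Rinv_0_lt_compat; lra).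
      eapply Rle_lt_trans; [|exact HK]. apply Rinv_le_contravar.
      * pose proof (pos_INR K); lra.
      * assert (INR K <= INR n) by (apply le_INR; lia). lra.
  - intro x. destruct (Hd x) as [M HM].
    destruct (dcv 1 ltac:(lra)) as [N1 HN1].
    exists (Nat.max (Nat.max M N1) (Nat.max (NP x) (NQ x))). intros n Hn.
    set (b := Rabs (f n x)).
    destruct (Rlt_le_dec b (2 * d n + 2 * / (INR n + 1))) as [Hl|Hge]; [exact Hl|exfalso].
    assert (Hdn : d n < 1).
    { specialize (HN1 n ltac:(lia)). unfold Rdist in HN1. rewrite Rminus_0_r in HN1.
      pose proof (Rle_abs (d n)). lra. }
    pose proof (dpos n) as dp. pose proof (pos_INR n) as pn.
    assert (ip : 0 < / (INR n + 1)) by (apply Rinv_0_lt_compat; lra).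
    assert (bpos : 0 < b) by lra.
    assert (key : forall k, (k <= n)%nat -> v k < b -> v k < d n).
    { intros k Hk Hvk. apply (HM n k); [lia | exact Hk |].
      unfold b in Hvk. destruct (Rle_lt_dec 0 (f n x)) as [Hf|Hf].
      - rewrite Rabs_right in Hvk by lra. left. apply P_BP; [lia | exact Hvk].
      - rewrite Rabs_left in Hvk by lra. right. intro HB. apply BQ_Q in HB. lra. }
    destruct (kfind b bpos) as [k [Hvk [Hk0 | Hkb]]].
    + subst k. assert (v 0 < d n) by (apply key; [lia | exact Hvk]).
      unfold v in H. simpl in H. rewrite Rplus_0_l, Rinv_1 in H. lra.
    + assert (knz : (k <> 0)%nat).
      { intro; subst k. simpl in Hkb. rewrite Rinv_0 in Hkb. lra. }
      assert (kp : 1 <= INR k) by (apply (le_INR 1); lia).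
      assert (Hk : (k <= n)%nat).
      { apply INR_le.
        assert (2 * / (INR n + 1) <= / INR k) by lra.
        assert (H2 : 2 * / (INR n + 1) * (INR n + 1) * INR k <= / INR k * (INR n + 1) * INR k).
        { apply Rmult_le_compat_r; [lra|]. apply Rmult_le_compat_r; lra. }
        replace (2 * / (INR n + 1) * (INR n + 1) * INR k) with (2 * INR k) in H2 by (field; lra).
        replace (/ INR k * (INR n + 1) * INR k) with (INR n + 1) in H2 by (field; lra).
        lra. }
      pose proof (key k Hk Hvk) as Hkd.
      assert (Hvk2 : v k < / (2 * INR k)).
      { assert (d n <= b / 2) by lra.
        assert (b / 2 <= / INR k / 2) by lra.
        replace (/ (2 * INR k)) with (/ INR k / 2) by (field; lra). lra. }
      unfold v in Hvk2.
      assert (/ (2 * INR k) <= / (INR k + 1)) by (apply Rinv_le_contravar; lra). lra.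
Qed.
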